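(* In the setting below, the assignment $\square$ on corelations preserves composition: for corelations $f\colon X\to Y$ and $g\colon Y\to Z$ in $\mathrm{Corel}_{(\mathcal E,\mathcal M)}(\mathcal C)$, $\square(g\circ f)=\square(g)\circ\square(f)$ as morphisms of $\mathrm{Corel}_{(\mathcal E',\mathcal M')}(\mathcal C')$ (i.e. up to isomorphism of cospans).
   Context: $\mathcal C,\mathcal C'$ are categories with finite colimits with costable factorisation systems $(\mathcal E,\mathcal M)$, $(\mathcal E',\mathcal M')$ (factorisation systems whose right class is stable under pushout). $A\colon\mathcal C\to\mathcal C'$ preserves finite colimits and $A(\mathcal M)\subseteq\mathcal M'$. An $(\mathcal E,\mathcal M)$-corelation is a cospan $X\xrightarrow{i}N\xleftarrow{o}Y$ with $[i,o]\in\mathcal E$, up to isomorphism; the $\mathcal E$-part of an arbitrary cospan is obtained by factoring $[i,o]=m\circ e$ ($e\colon X+Y\to\overline N\in\mathcal E$, $m\in\mathcal M$) and taking $X\xrightarrow{e\iota_X}\overline N\xleftarrow{e\iota_Y}Y$; corelations compose by taking the $\mathcal E$-part of the pushout composite cospan. The map $\square$ sends an $(\mathcal E,\mathcal M)$-corelation $X\xrightarrow{i}N\xleftarrow{o}Y$ to the $\mathcal E'$-part of the cospan $AX\xrightarrow{Ai}AN\xleftarrow{Ao}AY$. *)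

(* Defs.v *)
Set Implicit Arguments.
Unset Strict Implicit.

Record Category := {
  ob :> Type;
  hom : ob -> ob -> Type;
  idm : forall a, hom a a;
  comp : forall a b c, hom b c -> hom a b -> hom a c;
  comp_idl : forall a b (f : hom a b), comp (idm b) f = f;
  comp_idr : forall a b (f : hom a b), comp f (idm a) = f;
  comp_assoc : forall a b c d (f : hom a b) (g : hom b c) (h : hom c d),
      comp h (comp g f) = comp (comp h g) f
}.
Arguments idm {C} a : rename.
Arguments comp {C a b c} g f : rename.
Arguments hom {C} a b : rename.
Notation "g ⊚ f" := (comp g f) (at level 40, left associativity).

Definition is_iso (C : Category) (a b : C) (f : hom a b) : Prop :=
  exists g : hom b a, g ⊚ f = idm a /\ f ⊚ g = idm b.

Definition is_initial (C : Category) (z : C) : Prop :=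
  forall c : C, exists! h : hom z c, True.

Definition is_coproduct (C : Category) (a b s : C)
  (i1 : hom a s) (i2 : hom b s) : Prop :=
  forall c (f : hom a c) (g : hom b c),
    exists! h : hom s c, h ⊚ i1 = f /\ h ⊚ i2 = g.

Definition is_pushout (C : Category) (a b c p : C)
  (f : hom a b) (g : hom a c) (j : hom b p) (k : hom c p) : Prop :=
  j ⊚ f = k ⊚ g /\
  forall q (u : hom b q) (v : hom c q), u ⊚ f = v ⊚ g ->
    exists! h : hom p q, h ⊚ j = u /\ h ⊚ k = v.

(* A category with finite colimits, with chosen initial object,
   binary coproducts and pushouts (these generate all finite colimits). *)
Record FinColim (C : Category) := {
  initial : C;
  initial_is : is_initial initial;
  coprod : C -> C -> C;
  inj1 : forall a b, hom a (coprod a b);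
  inj2 : forall a b, hom b (coprod a b);
  copair : forall a b c, hom a c -> hom b c -> hom (coprod a b) c;
  copair_inj1 : forall a b c (f : hom a c) (g : hom b c), copair f g ⊚ inj1 a b = f;
  copair_inj2 : forall a b c (f : hom a c) (g : hom b c), copair f g ⊚ inj2 a b = g;
  copair_uniq : forall a b c (h : hom (coprod a b) c),
      h = copair (h ⊚ inj1 a b) (h ⊚ inj2 a b);
  po_obj : forall a b c, hom a b -> hom a c -> C;
  po_l : forall a b c (f : hom a b) (g : hom a c), hom b (po_obj f g);
  po_r : forall a b c (f : hom a b) (g : hom a c), hom c (po_obj f g);
  po_is : forall a b c (f : hom a b) (g : hom a c),
      is_pushout f g (po_l f g) (po_r f g)
}.
Arguments copair {C} _ {a b c} f g.
Arguments inj1 {C} _ a b.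
Arguments inj2 {C} _ a b.
Arguments coprod {C} _ a b.
Arguments po_obj {C} _ {a b c} f g.
Arguments po_l {C} _ {a b c} f g.
Arguments po_r {C} _ {a b c} f g.

Record FactSys (C : Category) := {
  E : forall a b : C, hom a b -> Prop;
  M : forall a b : C, hom a b -> Prop;
  E_iso : forall a b (f : hom a b), is_iso f -> E f;
  M_iso : forall a b (f : hom a b), is_iso f -> M f;
  E_comp : forall a b c (f : hom a b) (g : hom b c), E f -> E g -> E (g ⊚ f);
  M_comp : forall a b c (f : hom a b) (g : hom b c), M f -> M g -> M (g ⊚ f);
  fact_obj : forall a b : C, hom a b -> C;
  fact_e : forall a b (f : hom a b), hom a (fact_obj f);
  fact_m : forall a b (f : hom a b), hom (fact_obj f) b;
  fact_e_E : forall a b (f : hom a b), E (fact_e f);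
  fact_m_M : forall a b (f : hom a b), M (fact_m f);
  fact_eq : forall a b (f : hom a b), fact_m f ⊚ fact_e f = f;
  fact_diag : forall a b a' b' (f : hom a b) (f' : hom a' b')
      x (e : hom a x) (m : hom x b) x' (e' : hom a' x') (m' : hom x' b')
      (u : hom a a') (v : hom b b'),
      E e -> M m -> m ⊚ e = f -> E e' -> M m' -> m' ⊚ e' = f' ->
      v ⊚ f = f' ⊚ u ->
      exists! s : hom x x', s ⊚ e = e' ⊚ u /\ m' ⊚ s = v ⊚ m
}.
Arguments E {C} _ {a b} f.
Arguments M {C} _ {a b} f.
Arguments fact_obj {C} _ {a b} f.
Arguments fact_e {C} _ {a b} f.
Arguments fact_m {C} _ {a b} f.

Definition costable (C : Category) (F : FactSys C) : Prop :=
  forall (a b c p : C) (m : hom a b) (g : hom a c) (j : hom b p) (k : hom c p),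
    M F m -> is_pushout m g j k -> M F k.

Record Functor (C D : Category) := {
  fob :> C -> D;
  fhom : forall a b : C, hom a b -> hom (fob a) (fob b);
  fhom_id : forall a, fhom (idm a) = idm (fob a);
  fhom_comp : forall a b c (f : hom a b) (g : hom b c),
      fhom (g ⊚ f) = fhom g ⊚ fhom f
}.
Arguments fhom {C D} _ {a b} f.

(* preservation of finite colimits (initial object, binary coproducts,
   pushouts; these generate all finite colimits) *)
Definition preserves_finite_colimits (C D : Category) (A : Functor C D) : Prop :=
  (forall z : C, is_initial z -> is_initial (A z)) /\
  (forall (a b s : C) (i1 : hom a s) (i2 : hom b s),
      is_coproduct i1 i2 -> is_coproduct (fhom A i1) (fhom A i2)) /\
  (forall (a b c p : C) (f : hom a b) (g : hom a c) (j : hom b p) (k : hom c p),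
      is_pushout f g j k -> is_pushout (fhom A f) (fhom A g) (fhom A j) (fhom A k)).

Record cospan (C : Category) (X Y : C) := {
  apex : C;
  leg_l : hom X apex;
  leg_r : hom Y apex
}.
Arguments apex {C X Y} c.
Arguments leg_l {C X Y} c.
Arguments leg_r {C X Y} c.

Definition cospan_iso (C : Category) (X Y : C) (c d : cospan X Y) : Prop :=
  exists phi : hom (apex c) (apex d),
    is_iso phi /\ phi ⊚ leg_l c = leg_l d /\ phi ⊚ leg_r c = leg_r d.

Section Corel.
Variables (C : Category) (K : FinColim C) (F : FactSys C).

Definition is_corel (X Y : C) (c : cospan X Y) : Prop :=
  E F (copair K (leg_l c) (leg_r c)).

Definition epart (X Y : C) (c : cospan X Y) : cospan X Y :=
  let e := fact_e F (copair K (leg_l c) (leg_r c)) in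
  {| apex := _; leg_l := e ⊚ inj1 K X Y; leg_r := e ⊚ inj2 K X Y |}.

Definition cospan_comp (X Y Z : C) (f : cospan X Y) (g : cospan Y Z) : cospan X Z :=
  {| apex := po_obj K (leg_r f) (leg_l g);
     leg_l := po_l K (leg_r f) (leg_l g) ⊚ leg_l f;
     leg_r := po_r K (leg_r f) (leg_l g) ⊚ leg_r g |}.

Definition corel_comp (X Y Z : C) (g : cospan Y Z) (f : cospan X Y) : cospan X Z :=
  epart (cospan_comp f g).
End Corel.

Definition cospan_map (C D : Category) (A : Functor C D) (X Y : C) (c : cospan X Y)
  : cospan (A X) (A Y) :=
  {| apex := A (apex c); leg_l := fhom A (leg_l c); leg_r := fhom A (leg_r c) |}.

Definition box (C D : Category) (K' : FinColim D) (F' : FactSys D)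
  (A : Functor C D) (X Y : C) (c : cospan X Y) : cospan (A X) (A Y) :=
  epart K' F' (cospan_map A c).

(* Main.v *)
Require Import Defs.
Set Implicit Arguments.

Lemma uniq_eq (T : Type) (P : T -> Prop) (a b : T) :
  (exists! x, P x) -> P a -> P b -> a = b.
Proof. intros [x [_ H]] Ha Hb. rewrite <- (H a Ha), <- (H b Hb). reflexivity. Qed.

Lemma ciso_refl (C : Category) X Y (c : cospan (C:=C) X Y) : cospan_iso c c.
Proof. exists (idm _). split. exists (idm _). rewrite comp_idl. split; reflexivity.
  rewrite !comp_idl. split; reflexivity. Qed.

Lemma ciso_sym (C : Category) X Y (c d : cospan (C:=C) X Y) : cospan_iso c d -> cospan_iso d c.
Proof. intros [phi [[psi [H1 H2]] [Hl Hr]]]. exists psi. split.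
  exists phi. split; assumption. split.
  - rewrite <- Hl, comp_assoc, H1, comp_idl. reflexivity.
  - rewrite <- Hr, comp_assoc, H1, comp_idl. reflexivity. Qed.

Lemma ciso_trans (C : Category) X Y (c d e : cospan (C:=C) X Y) :
  cospan_iso c d -> cospan_iso d e -> cospan_iso c e.
Proof. intros [phi [[psi [H1 H2]] [Hl Hr]]] [phi' [[psi' [H1' H2']] [Hl' Hr']]].
  exists (phi' ⊚ phi). split.
  - exists (psi ⊚ psi'). split.
    + rewrite !comp_assoc, <- (comp_assoc phi' psi' psi), H1', comp_idr. exact H1.
    + rewrite !comp_assoc, <- (comp_assoc psi phi phi'), H2, comp_idr. exact H2'.
  - split.
    + rewrite <- comp_assoc, Hl. exact Hl'.
    + rewrite <- comp_assoc, Hr. exact Hr'. Qed.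

Lemma po_uniq (C : Category) (a b c p : C) (f : hom a b) (g : hom a c) (j : hom b p) (k : hom c p) :
  is_pushout f g j k -> forall q (h h' : hom p q), h ⊚ j = h' ⊚ j -> h ⊚ k = h' ⊚ k -> h = h'.
Proof. intros [Hsq Hu] q h h' E1 E2.
  destruct (Hu q (h ⊚ j) (h ⊚ k)) as [x [_ Hx]].
  { rewrite <- !comp_assoc, Hsq. reflexivity. }
  rewrite <- (Hx h), <- (Hx h'); auto. Qed.

Lemma M_iso_comp (C : Category) (F : FactSys C) a b c (f : hom a b) (g : hom b c) :
  M F f -> is_iso g -> M F (g ⊚ f).
Proof. intros. apply M_comp; auto. apply M_iso; auto. Qed.

Lemma copair_comp (C : Category) (K : FinColim C) X Y Q Q' (l : hom X Q) (r : hom Y Q) (mu : hom Q Q') :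
  mu ⊚ copair K l r = copair K (mu ⊚ l) (mu ⊚ r).
Proof. rewrite (copair_uniq (mu ⊚ copair K l r)).
  rewrite <- !comp_assoc, copair_inj1, copair_inj2. reflexivity. Qed.

Lemma epart_M (C : Category) (K : FinColim C) (F : FactSys C) X Y (c d : cospan X Y)
  (mu : hom (apex d) (apex c)) : M F mu -> mu ⊚ leg_l d = leg_l c -> mu ⊚ leg_r d = leg_r c ->
  cospan_iso (epart K F d) (epart K F c).
Proof.
  intros HM Hl Hr.
  set (cd := copair K (leg_l d) (leg_r d)).
  set (cc := copair K (leg_l c) (leg_r c)).
  assert (Hcc : mu ⊚ cd = cc) by (unfold cd, cc; rewrite copair_comp, Hl, Hr; reflexivity).
  assert (Fd : (mu ⊚ fact_m F cd) ⊚ fact_e F cd = cc)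
    by (rewrite <- comp_assoc, fact_eq; exact Hcc).
  assert (MD : M F (mu ⊚ fact_m F cd)) by (apply M_comp; auto; apply fact_m_M).
  destruct (@fact_diag _ F _ _ _ _ cc cc _ _ _ _ (fact_e F cc) (fact_m F cc) (idm _) (idm _)
     (fact_e_E F cd) MD Fd (fact_e_E F cc) (fact_m_M F cc) (fact_eq F cc)
     ltac:(rewrite comp_idl, comp_idr; reflexivity)) as [s [[Hs1 Hs2] _]].
  destruct (@fact_diag _ F _ _ _ _ cc cc _ _ _ _ (fact_e F cd) (mu ⊚ fact_m F cd) (idm _) (idm _)
     (fact_e_E F cc) (fact_m_M F cc) (fact_eq F cc) (fact_e_E F cd) MD Fd
     ltac:(rewrite comp_idl, comp_idr; reflexivity)) as [t [[Ht1 Ht2] _]].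
  rewrite comp_idr in Hs1, Ht1. rewrite comp_idl in Hs2, Ht2.
  assert (Hts : t ⊚ s = idm _).
  { eapply uniq_eq.
      * apply (@fact_diag _ F _ _ _ _ cc cc _ _ _ _ (fact_e F cd) (mu ⊚ fact_m F cd) (idm _) (idm _)
          (fact_e_E F cd) MD Fd (fact_e_E F cd) MD Fd
          ltac:(rewrite comp_idl, comp_idr; reflexivity)).
      * cbv beta. split.
        -- rewrite <- (comp_assoc (fact_e F cd) s t), Hs1, Ht1, comp_idr. reflexivity.
        -- rewrite comp_idl, comp_assoc, Ht2, Hs2. reflexivity.
      * cbv beta. split; rewrite ?comp_idl, ?comp_idr; reflexivity. }
  assert (Hst : s ⊚ t = idm _).
  { eapply uniq_eq.
      * apply (@fact_diag _ F _ _ _ _ cc cc _ _ _ _ (fact_e F cc) (fact_m F cc) (idm _) (idm _)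
          (fact_e_E F cc) (fact_m_M F cc) (fact_eq F cc) (fact_e_E F cc) (fact_m_M F cc) (fact_eq F cc)
          ltac:(rewrite comp_idl, comp_idr; reflexivity)).
      * cbv beta. split.
        -- rewrite <- (comp_assoc (fact_e F cc) t s), Ht1, Hs1, comp_idr. reflexivity.
        -- rewrite comp_idl, comp_assoc, Hs2, Ht2. reflexivity.
      * cbv beta. split; rewrite ?comp_idl, ?comp_idr; reflexivity. }
  exists s. split.
  - exists t. split; assumption.
  - simpl. fold cd cc. rewrite !comp_assoc, Hs1. split; reflexivity.
Qed.

Lemma ext (C : Category) (a b c d : C) (x : hom b c) (y : hom a b) (z : hom a c) :
  x ⊚ y = z -> forall (w : hom c d), w ⊚ x ⊚ y = w ⊚ z.
Proof. intros H w. rewrite <- comp_assoc, H. reflexivity. Qed.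

Lemma po_M (C : Category) (K : FinColim C) (F : FactSys C) (hF : costable F)
  (y nf' nf ng' ng : C) (r' : hom y nf') (l' : hom y ng') (mf : hom nf' nf) (mg : hom ng' ng)
  (r : hom y nf) (l : hom y ng) :
  M F mf -> M F mg -> mf ⊚ r' = r -> mg ⊚ l' = l ->
  exists mu : hom (po_obj K r' l') (po_obj K r l),
    M F mu /\ mu ⊚ po_l K r' l' = po_l K r l ⊚ mf /\ mu ⊚ po_r K r' l' = po_r K r l ⊚ mg.
Proof.
  intros Mf Mg Hr Hl.
  pose proof (po_is K r' l') as HP'. pose proof (po_is K r l) as HP.
  set (p1 := po_l K r' l') in *. set (p2 := po_r K r' l') in *.
  set (q1 := po_l K r l) in *. set (q2 := po_r K r l) in *.
  destruct HP' as [sq' U']. destruct HP as [sq U].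
  destruct (U' _ (q1 ⊚ mf) (q2 ⊚ mg)) as [mu [[Hmu1 Hmu2] _]].
  { rewrite <- !comp_assoc, Hr, Hl. exact sq. }
  pose proof (po_is K mf p1) as HR.
  set (a := po_l K mf p1) in *. set (b := po_r K mf p1) in *.
  assert (Mb : M F b) by (eapply hF; [exact Mf| exact HR]).
  pose proof (po_is K mg (b ⊚ p2)) as HS.
  set (k1 := po_l K mg (b ⊚ p2)) in *. set (k2 := po_r K mg (b ⊚ p2)) in *.
  assert (Mk2 : M F k2) by (eapply hF; [exact Mg| exact HS]).
  destruct HR as [sqR UR]. destruct HS as [sqS US].
  destruct (UR _ q1 mu) as [h1 [[Hh1a Hh1b] _]]. { symmetry. exact Hmu1. }
  destruct (US _ q2 h1) as [h [[Hha Hhb] _]].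
  { rewrite comp_assoc, Hh1b. symmetry. exact Hmu2. }
  destruct (U _ (k2 ⊚ a) k1) as [g0 [[Hg1 Hg2] _]].
  { rewrite <- Hr, <- Hl. rewrite !comp_assoc. rewrite <- (comp_assoc mf a k2), sqR.
    rewrite sqS. rewrite !comp_assoc. rewrite <- (comp_assoc r' p1 (k2 ⊚ b)), sq'.
    rewrite !comp_assoc. reflexivity. }
  exists mu. split; [|split; assumption].
  assert (Emu : h ⊚ (k2 ⊚ b) = mu) by (rewrite comp_assoc, Hhb; exact Hh1b).
  rewrite <- Emu. apply M_comp; [apply M_comp; assumption|].
  apply M_iso. exists g0. split.
  -
    apply (po_uniq (conj sqS US)) ; cycle 1.
    + rewrite <- comp_assoc, Hhb, comp_idl.
      apply (po_uniq (conj sqR UR)).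
      * rewrite <- comp_assoc, Hh1a. exact Hg1.
      * rewrite <- comp_assoc, Hh1b.
        apply (po_uniq (conj sq' U')).
        -- rewrite <- comp_assoc, Hmu1, comp_assoc, Hg1.
           rewrite <- comp_assoc, sqR, comp_assoc. reflexivity.
        -- rewrite <- comp_assoc, Hmu2, comp_assoc, Hg2.
           rewrite sqS, comp_assoc. reflexivity.
    + rewrite <- comp_assoc, Hha, Hg2, comp_idl. reflexivity.
  - apply (po_uniq (conj sq U)).
    + rewrite <- comp_assoc, Hg1, comp_assoc, Hhb, Hh1a, comp_idl. reflexivity.
    + rewrite <- comp_assoc, Hg2, Hha, comp_idl. reflexivity.
Qed.

Lemma po_iso (C : Category) (a b c p p' : C) (f : hom a b) (g : hom a c)
  (j : hom b p) (k : hom c p) (j' : hom b p') (k' : hom c p') :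
  is_pushout f g j k -> is_pushout f g j' k' ->
  exists phi : hom p p', is_iso phi /\ phi ⊚ j = j' /\ phi ⊚ k = k'.
Proof.
  intros H H'. pose proof H as [sq U]. pose proof H' as [sq' U'].
  destruct (U _ j' k' sq') as [phi [[P1 P2] _]].
  destruct (U' _ j k sq) as [psi [[Q1 Q2] _]].
  exists phi. split; [|split; assumption].
  exists psi. split.
  - apply (po_uniq H); rewrite comp_idl, <- comp_assoc.
    + rewrite P1, Q1. reflexivity.
    + rewrite P2, Q2. reflexivity.
  - apply (po_uniq H'); rewrite comp_idl, <- comp_assoc.
    + rewrite Q1, P1. reflexivity.
    + rewrite Q2, P2. reflexivity.
Qed.

Lemma epart_legl (C : Category) (K : FinColim C) (F : FactSys C) X Y (c : cospan X Y) :
  fact_m F (copair K (leg_l c) (leg_r c)) ⊚ leg_l (epart K F c) = leg_l c.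
Proof. simpl. rewrite comp_assoc, fact_eq, copair_inj1. reflexivity. Qed.
Lemma epart_legr (C : Category) (K : FinColim C) (F : FactSys C) X Y (c : cospan X Y) :
  fact_m F (copair K (leg_l c) (leg_r c)) ⊚ leg_r (epart K F c) = leg_r c.
Proof. simpl. rewrite comp_assoc, fact_eq, copair_inj2. reflexivity. Qed.

Theorem mainTheorem5 (C C' : Category) (K : FinColim C) (K' : FinColim C')
  (F : FactSys C) (F' : FactSys C')
  (hF : costable F) (hF' : costable F')
  (A : Functor C C') (hA : preserves_finite_colimits A)
  (hAM : forall (a b : C) (m : hom a b), M F m -> M F' (fhom A m))
  (X Y Z : C) (f : cospan X Y) (g : cospan Y Z)
  (hf : is_corel K F f) (hg : is_corel K F g) :
  cospan_iso (box K' F' A (corel_comp K F g f))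
             (corel_comp K' F' (box K' F' A g) (box K' F' A f)).
Proof.
  set (c := cospan_comp K f g).
  assert (S1 : cospan_iso (box K' F' A (corel_comp K F g f)) (epart K' F' (cospan_map A c))).
  { unfold box, corel_comp. fold c.
    apply (epart_M K' F' (cospan_map A c) (cospan_map A (epart K F c))
             (fhom A (fact_m F (copair K (leg_l c) (leg_r c))))).
    - apply hAM, fact_m_M.
    - simpl. rewrite <- fhom_comp. f_equal. apply (epart_legl K F c).
    - simpl. rewrite <- fhom_comp. f_equal. apply (epart_legr K F c). }
  assert (S2 : cospan_iso (epart K' F' (cospan_comp K' (cospan_map A f) (cospan_map A g)))
                          (epart K' F' (cospan_map A c))).
  { destruct hA as [_ [_ hpo]].
    pose proof (hpo _ _ _ _ _ _ _ _ (po_is K (leg_r f) (leg_l g))) as HA.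
    destruct (po_iso (po_is K' (fhom A (leg_r f)) (fhom A (leg_l g))) HA) as [phi [Hphi [P1 P2]]].
    apply (epart_M K' F' (cospan_map A c) (cospan_comp K' (cospan_map A f) (cospan_map A g)) phi).
    - apply M_iso, Hphi.
    - simpl. rewrite comp_assoc, P1, fhom_comp. reflexivity.
    - simpl. rewrite comp_assoc, P2, fhom_comp. reflexivity. }
  assert (S3 : cospan_iso (corel_comp K' F' (box K' F' A g) (box K' F' A f))
                 (epart K' F' (cospan_comp K' (cospan_map A f) (cospan_map A g)))).
  { unfold corel_comp, box.
    destruct (po_M K' hF' _ _ _ _ _ _ _ _ _ (fact_m_M F' _) (fact_m_M F' _) (epart_legr K' F' (cospan_map A f)) (epart_legl K' F' (cospan_map A g))) as [mu [Mmu [H1 H2]]].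
    apply (epart_M K' F' (cospan_comp K' (cospan_map A f) (cospan_map A g)) (cospan_comp K' (epart K' F' (cospan_map A f)) (epart K' F' (cospan_map A g))) mu Mmu).
    - cbn [cospan_comp leg_l leg_r]. rewrite comp_assoc.
      pose proof (f_equal (fun x => x ⊚ leg_l (epart K' F' (cospan_map A f))) H1) as H1'.
      cbv beta in H1'. etransitivity; [exact H1'|].
      rewrite <- comp_assoc. exact (f_equal _ (epart_legl K' F' (cospan_map A f))).
    - cbn [cospan_comp leg_l leg_r]. rewrite comp_assoc.
      pose proof (f_equal (fun x => x ⊚ leg_r (epart K' F' (cospan_map A g))) H2) as H2'.
      cbv beta in H2'. etransitivity; [exact H2'|].
      rewrite <- comp_assoc. exact (f_equal _ (epart_legr K' F' (cospan_map A g))). }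
  eapply ciso_trans; [exact S1|].
  eapply ciso_trans; [apply ciso_sym; exact S2|].
  apply ciso_sym; exact S3.
Qed.
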